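(* Let $n,x$ be integers with $1<x<n$, so that $G=C_{2n}(x,1,n)$ is a $5$-regular circulant graph. If $n\equiv 0\pmod 3$, $x\equiv 2\pmod 3$ and $1<x\leq \tfrac{2n}{3}$, then $G$ is word-representable.
   Context: Two distinct letters $x,y$ alternate in a word $w$ if, after deleting all other letters from $w$, the resulting word is of the form $xyxy\cdots$ or $yxyx\cdots$ (of even or odd length). A graph $G=(V,E)$ is word-representable if there is a word $w$ over the alphabet $V$, containing every letter of $V$ at least once, such that for all distinct $x,y\in V$, $xy\in E$ if and only if $x$ and $y$ alternate in $w$. For an integer $m$ and a set $R$ of positive integers each at most $m/2$, the circulant graph $C_m(R)$ has vertex set $\{0,1,\dots,m-1\}$, with $i$ and $j$ adjacent iff $\min(|i-j|,\,m-|i-j|)\in R$. $C_{2n}(x,1,n)$ denotes the circulant graph on $2n$ vertices with jump set $\{1,x,n\}$; it is $5$-regular exactly when $1<x<n$. *)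

(* Defs.v *)
From mathcomp Require Import all_boot.
Unset Printing Implicit Defensive.

Definition restrict2 (T : eqType) (w : seq T) (x y : T) : seq T :=
  [seq z <- w | (z == x) || (z == y)].

(* x and y alternate in w: the restricted word is of the form xyxy... or
   yxyx..., i.e. no two consecutive letters of it are equal. *)
Definition alternate (T : eqType) (w : seq T) (x y : T) : bool :=
  let u := restrict2 _ w x y in
  all (fun p => p.1 != p.2) (zip u (behead u)).

Definition word_representable (T : finType) (e : rel T) : Prop :=
  exists w : seq T, (forall v : T, v \in w) /\
    (forall u v : T, u != v -> (e u v <-> alternate _ w u v)).

Definition circ_dist (m i j : nat) : nat :=
  let d := if i <= j then j - i else i - j in minn d (m - d).

Definition circulant (m : nat) (R : pred nat) : rel 'I_m :=
  fun i j => circ_dist m i j \in R.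

Definition C2n (n x : nat) : rel 'I_(2 * n) :=
  circulant (2 * n) (fun d => [|| d == 1, d == x | d == n]).

(* Main.v *)
Require Import Defs.
From mathcomp Require Import all_boot.
From mathcomp Require Import zify.
Set Implicit Arguments. Unset Strict Implicit. Unset Printing Implicit Defensive.

Fixpoint altl (T : eqType) (s : seq T) : bool :=
  if s is x :: s' then (if s' is y :: _ then (x != y) && altl s' else true) else true.

Lemma altlE (T : eqType) (s : seq T) :
  all (fun p => p.1 != p.2) (zip s (behead s)) = altl s.
Proof.
elim: s => [|x s IH] //; case: s IH => [|y s] IH //=.
by move: IH => /= ->.
Qed.

Lemma altl_consK (T : eqType) (x : T) s : altl (x :: s) -> altl s.
Proof. by case: s => [|y s] //= /andP[]. Qed.

Lemma altl_catr (T : eqType) (s t : seq T) : altl (s ++ t) -> altl t.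
Proof. elim: s => [|x s IH] //= H; apply: IH; exact: altl_consK H. Qed.

Lemma altl_cons2 (T : eqType) (x y : T) s : altl [:: x, y & s] = (x != y) && altl (y :: s).
Proof. by []. Qed.

Lemma altl_catl (T : eqType) (s t : seq T) : altl (s ++ t) -> altl s.
Proof.
elim: s => [|x s IH] //; case: s IH => [|y s] IH; first by [].
rewrite cat_cons cat_cons altl_cons2 altl_cons2 => /andP[-> H] /=.
exact: IH.
Qed.

Lemma altl_mid (T : eqType) (s1 s s2 : seq T) : altl (s1 ++ s ++ s2) -> altl s.
Proof. by move/altl_catr/altl_catl. Qed.

Definition uvr (T : eqType) (u v : T) n := flatten (nseq n [:: u; v]).

Lemma uvr_add (T : eqType) (u v : T) n m : uvr u v (n + m) = uvr u v n ++ uvr u v m.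
Proof. by rewrite /uvr nseqD flatten_cat. Qed.

Lemma uvrS (T : eqType) (u v : T) n : uvr u v n.+1 = [:: u, v & uvr u v n].
Proof. by []. Qed.

Lemma altl_uvr (T : eqType) (u v : T) n : u != v -> altl (uvr u v n).
Proof.
move=> Huv.
suff : altl (uvr u v n) && altl (v :: uvr u v n) by case/andP.
elim: n => [|n]; first by [].
rewrite uvrS => /andP[H1 H2].
by rewrite !altl_cons2 H2 Huv eq_sym Huv.
Qed.

Lemma flatten_uv (T : eqType) (u v : T) (ss : seq (seq T)) :
  (forall s, s \in ss -> exists n, s = uvr u v n) -> exists n, flatten ss = uvr u v n.
Proof.
elim: ss => [|s ss IH] H; first by exists 0.
have [n1 ->] := H s (mem_head _ _).
have [n2 E] : exists n, flatten ss = uvr u v n.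
  by apply: IH => t Ht; apply: H; rewrite inE Ht orbT.
by exists (n1 + n2); rewrite /= E uvr_add.
Qed.

Lemma flatten_mid (T : eqType) (ss : seq (seq T)) s : s \in ss ->
  exists s1 s2, flatten ss = s1 ++ s ++ s2.
Proof.
case/splitPr => t1 t2; exists (flatten t1), (flatten t2).
by rewrite flatten_cat.
Qed.

Section Gadgets.
Variable V : finType.

Definition Lk (K : V -> nat) : seq V := sort (fun x y => K x <= K y) (enum V).

Lemma mem_Lk K w : w \in Lk K.
Proof. by rewrite /Lk mem_sort mem_enum. Qed.

Lemma Lk_filter (K : V -> nat) (P : pred V) u v :
  u != v -> K u < K v -> (forall w, P w -> (w == u) || (w == v)) ->
  filter P (Lk K) = (if P u then [:: u] else [::]) ++ (if P v then [:: v] else [::]).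
Proof.
move=> Huv Hk HP.
rewrite /Lk filter_sort; last first.
- by move=> y x z; apply: leq_trans.
- by move=> x y; apply: leq_total.
set s := filter P (enum V).
set r := _ ++ _.
have Hr : uniq r by rewrite /r; case: (P u); case: (P v) => //=; rewrite inE andbT.
have Hs : uniq s by rewrite filter_uniq // enum_uniq.
have Hsr : perm_eq s r.
  apply: uniq_perm => // w; rewrite mem_filter mem_enum andbT /r.
  case Pw: (P w).
    case/orP: (HP w Pw) => /eqP Ew; subst w; first by rewrite Pw mem_cat inE eqxx.
    by rewrite Pw mem_cat orbC inE eqxx.
  apply/esym; apply/negbTE; rewrite mem_cat negb_or; apply/andP; split.
  + case Pu: (P u) => //; rewrite inE; apply/eqP => Ew; subst w; by rewrite Pu in Pw.
  + case Pv: (P v) => //; rewrite inE; apply/eqP => Ew; subst w; by rewrite Pv in Pw.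
have Hp : perm_eq (sort (fun x y => K x <= K y) s) r by rewrite perm_sort.
have Hsort : sorted (fun x y => K x <= K y) (sort (fun x y => K x <= K y) s).
  by apply: sort_sorted => x y; apply: leq_total.
move: Hp Hsort; set t := sort _ s => Hp Hsort.
clear Hsr; move: Hp Hr; rewrite /r.
case: (P u); case: (P v) => /= Hp Hr; try by apply: perm_small_eq.
have := perm_size Hp; case: t Hp Hsort => [|y [|z [|]]] //= Hp Hsort _.
have Hu : uniq [:: y; z] by rewrite (perm_uniq Hp).
rewrite /= inE andbT in Hu.
have Hy : y \in [:: u; v] by rewrite -(perm_mem Hp) mem_head.
have Hz : z \in [:: u; v] by rewrite -(perm_mem Hp) !inE eqxx orbT.
rewrite !inE in Hy Hz.
case/orP: Hy => /eqP Ey; case/orP: Hz => /eqP Ez; subst; rewrite ?eqxx in Hu => //.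
rewrite andbT in Hsort; move: Hsort Hk; rewrite leqNgt => /negP; done.
Qed.

Definition plain (K : V -> nat) := Lk K ++ Lk K.
Definition gad2 (K : V -> nat) (S : V -> bool) (a : V) :=
  [seq w <- Lk K | ~~ S w] ++ ([seq w <- Lk K | K w <= K a] ++
   ([seq w <- Lk K | S w] ++ [seq w <- Lk K | K a < K w])).

Lemma restr_Lk K u v : u != v -> K u < K v -> restrict2 _ (Lk K) u v = [:: u; v].
Proof.
move=> Huv Hk; rewrite /restrict2 (@Lk_filter K _ u v) //.
by rewrite !eqxx /= orbT.
Qed.

Lemma restr_Q K (Q : pred V) u v : u != v -> K u < K v ->
  restrict2 _ [seq w <- Lk K | Q w] u v =
  (if Q u then [:: u] else [::]) ++ (if Q v then [:: v] else [::]).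
Proof.
move=> Huv Hk; rewrite /restrict2 -filter_predI (@Lk_filter K _ u v) //=; last first.
  by move=> w /andP[].
by rewrite !eqxx /= orbT.
Qed.

Lemma restr_plain K u v : u != v -> K u < K v -> restrict2 _ (plain K) u v = [:: u; v; u; v].
Proof.
move=> Huv Hk; rewrite /plain /restrict2 filter_cat.
by have := restr_Lk Huv Hk; rewrite /restrict2 => ->.
Qed.

Lemma restr_gad2 K (S : V -> bool) a u v : u != v -> K u < K v ->
  restrict2 _ (gad2 K S a) u v =
  ((if ~~ S u then [:: u] else [::]) ++ (if ~~ S v then [:: v] else [::])) ++
  (((if K u <= K a then [:: u] else [::]) ++ (if K v <= K a then [:: v] else [::])) ++
  (((if S u then [:: u] else [::]) ++ (if S v then [:: v] else [::])) ++
   ((if K a < K u then [:: u] else [::]) ++ (if K a < K v then [:: v] else [::])))).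
Proof.
move=> Huv Hk; rewrite /gad2.
have E : forall s1 s2, restrict2 _ (s1 ++ s2) u v = restrict2 _ s1 u v ++ restrict2 _ s2 u v.
  by move=> s1 s2; rewrite /restrict2 filter_cat.
rewrite !E.
by rewrite !(@restr_Q K _ u v) //.
Qed.

Lemma gad2_edge K (S : V -> bool) a u v : u != v -> K u < K v ->
  (S u -> S v) -> (S v -> K a < K u) -> (S v -> K a < K v) ->
  restrict2 _ (gad2 K S a) u v = [:: u; v; u; v].
Proof.
move=> Huv Hk H1 H2 H3; rewrite restr_gad2 //.
case Sv: (S v).
- have Hu := H2 Sv; have Hv := H3 Sv.
  rewrite (leqNgt (K u)) (leqNgt (K v)) Hu Hv /=.
  by case: (S u).
- case Su: (S u); first by rewrite (H1 Su) in Sv.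
  rewrite /=.
  case: (leqP (K u) (K a)) => Hua; case: (leqP (K v) (K a)) => Hva //=.
  exfalso; lia.
Qed.

Lemma gad2_target K (S : V -> bool) a b : a != b -> K a < K b -> S b -> ~~ S a ->
  restrict2 _ (gad2 K S a) a b = [:: a; a; b; b].
Proof.
move=> Hab Hk Sb Sa; rewrite restr_gad2 //.
by rewrite Sb (negbTE Sa) leqnn ltnn Hk (leqNgt (K b)) Hk.
Qed.

End Gadgets.

Section Main.
Variable V : finType.
Variable G : rel V.
Hypothesis Gsym : forall u v, G u v = G v u.
Variable p : V -> nat.
Variable c : nat.
Hypothesis Hlen : forall u v, G u v -> p u < p v -> c < 2 * (p v - p u) < 3 * c.
Hypothesis Hne : forall u v, G u v -> p u != p v.

Definition e := [rel u v | G u v && (p u < p v)].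
Definition R := connect e.

Lemma e_len u v : e u v -> p u < p v /\ c < 2 * (p v - p u) < 3 * c.
Proof. by case/andP=> H1 H2; split => //; apply: Hlen. Qed.

Lemma R_le u v : R u v -> p u <= p v.
Proof.
case/connectP => s Hs ->.
elim: s u Hs => [|w s IH] u //= /andP[Huw Hs].
apply: leq_trans (IH _ Hs); have [H _] := e_len Huw; exact: ltnW.
Qed.

Lemma R_step u v : R u v -> u = v \/ exists2 w, e u w & R w v.
Proof.
case/connectP => -[|w s] /= Hs ->; first by left.
case/andP: Hs => Huw Hs; right; exists w => //.
by apply/connectP; exists s.
Qed.

Lemma R_lt u v : R u v -> u != v -> p u < p v /\ c < 2 * (p v - p u).
Proof.
case/R_step => [-> | [w Huw Hwv]]; first by rewrite eqxx.
move=> _; have [H1 /andP[H2 _]] := e_len Huw; have H3 := R_le Hwv.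
split; lia.
Qed.

Lemma R_antisym u v : R u v -> R v u -> u = v.
Proof.
move=> H1 H2; apply/eqP; apply/negPn/negP => Hne'.
have [H _] := R_lt H1 Hne'; have := R_le H2; lia.
Qed.

Lemma HNS u a b s : R u a -> R a b -> R b s -> e u s -> a != b -> ~~ G a b -> False.
Proof.
move=> Hua Hab Hbs Hus Hne' HG.
case: (R_step Hab) => [E | [w Haw Hwb]]; first by rewrite E eqxx in Hne'.
case: (eqVneq w b) => [E | Hwb'].
  by subst w; move/andP: Haw => [H _]; rewrite H in HG.
have [Hwb1 Hwb2] := R_lt Hwb Hwb'.
have [Haw1 /andP[Haw2 _]] := e_len Haw.
have [Hus1 /andP[_ Hus2]] := e_len Hus.
have Hp1 := R_le Hua; have Hp2 := R_le Hbs.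
case: (eqVneq u a) => [Eua | Hua'].
  subst u; case: (eqVneq b s) => [Ebs | Hbs'].
    by subst s; move/andP: Hus => [H _]; rewrite H in HG.
  have [Hbs1 Hbs2] := R_lt Hbs Hbs'; lia.
have [Hua1 Hua2] := R_lt Hua Hua'; lia.
Qed.

Definition Bnd := (\max_(v : V) p v).+1.
Lemma p_lt_Bnd w : p w < Bnd.
Proof. by rewrite ltnS; apply: (@leq_bigmax _ p w). Qed.

Definition Ka (a w : V) := (if R w a then 0 else Bnd) + p w.

Lemma Ka_self a : Ka a a = p a.
Proof. by rewrite /Ka /R connect0. Qed.

Lemma Ka_out a w : ~~ R w a -> Ka a a < Ka a w.
Proof. move/negbTE => H; rewrite Ka_self /Ka H; have := p_lt_Bnd a; lia. Qed.

Lemma Ka_edge a u v : e u v -> Ka a u < Ka a v.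
Proof.
move=> Huv; have [H _] := e_len Huv; rewrite /Ka.
case Rva: (R v a).
  have -> : R u a by move: Rva; rewrite /R; apply: connect_trans; apply: connect1.
  by [].
case: (R u a); lia.
Qed.

Definition Sab (a b w : V) := [&& R a b, a != b, ~~ G a b & R b w].

Definition block (a b : V) := plain (Ka a) ++ (plain (Ka b) ++ gad2 (Ka a) (Sab a b) a).

Definition Wd := flatten [seq flatten [seq block a b | b <- enum V] | a <- enum V].

Lemma restrC (T : eqType) (w : seq T) a b : restrict2 _ w a b = restrict2 _ w b a.
Proof. by apply: eq_filter => z; rewrite orbC. Qed.

Lemma restr_cat (T : eqType) (s1 s2 : seq T) a b :
  restrict2 _ (s1 ++ s2) a b = restrict2 _ s1 a b ++ restrict2 _ s2 a b.
Proof. by rewrite /restrict2 filter_cat. Qed.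

Lemma mem_Wd v : v \in Wd.
Proof.
apply/flattenP; exists (flatten [seq block v b | b <- enum V]).
  by apply: map_f; rewrite mem_enum.
apply/flattenP; exists (block v v); first by apply: map_f; rewrite mem_enum.
by rewrite /block /plain !mem_cat mem_Lk.
Qed.

Lemma e_neq u v : e u v -> u != v.
Proof. by case/e_len => H _; apply/eqP => E; rewrite E ltnn in H. Qed.

Lemma restr_block_edge u v a b : e u v -> restrict2 _ (block a b) u v = uvr u v 6.
Proof.
move=> Huv; have Hn := e_neq Huv.
have Ka1 := Ka_edge a Huv; have Kb1 := Ka_edge b Huv.
rewrite /block restr_cat restr_plain //.
rewrite restr_cat restr_plain //.
rewrite gad2_edge //.
- rewrite /Sab => /and4P[-> -> -> Hbu] /=.
  by apply: (connect_trans Hbu); apply: connect1.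
- move=> /and4P[Hab Hab' HG Hbv]; apply: Ka_out; apply/negP => Hua.
  exact: (HNS Hua Hab Hbv Huv Hab' HG).
- move=> /and4P[Hab Hab' HG Hbv]; apply: Ka_out; apply/negP => Hva.
  have Hba : R b a by rewrite /R (connect_trans Hbv Hva).
  by rewrite (R_antisym Hab Hba) eqxx in Hab'.
Qed.

Lemma Wd_edge u v : e u v -> altl (restrict2 _ Wd u v).
Proof.
move=> Huv; have Hn := e_neq Huv.
suff [n ->] : exists n, restrict2 _ Wd u v = uvr u v n by apply: altl_uvr.
rewrite /Wd /restrict2 filter_flatten; apply: flatten_uv => s /mapP[t /mapP[a _ ->] ->].
rewrite filter_flatten; apply: flatten_uv => s' /mapP[t' /mapP[b _ ->] ->].
by exists 6; apply: restr_block_edge.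
Qed.

Lemma block_in a b : exists s1 s2, Wd = s1 ++ block a b ++ s2.
Proof.
have [t1 [t2 E1]] : exists t1 t2, Wd = t1 ++ flatten [seq block a b | b <- enum V] ++ t2.
  by apply: flatten_mid; apply: map_f; rewrite mem_enum.
have [r1 [r2 E2]] : exists r1 r2, flatten [seq block a b | b <- enum V] = r1 ++ block a b ++ r2.
  by apply: flatten_mid; apply: map_f; rewrite mem_enum.
by exists (t1 ++ r1), (r2 ++ t2); rewrite E1 E2 -!catA.
Qed.

Lemma Wd_mid a b u v : altl (restrict2 _ Wd u v) -> altl (restrict2 _ (block a b) u v).
Proof.
have [s1 [s2 ->]] := block_in a b.
by rewrite !restr_cat => /altl_mid.
Qed.

Lemma Wd_reach u v : R u v -> u != v -> ~~ G u v -> ~~ altl (restrict2 _ Wd u v).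
Proof.
move=> Huv Hn HG; apply/negP => /(Wd_mid u v).
rewrite /block restr_cat => /altl_catr; rewrite restr_cat => /altl_catr.
have NRvu : ~~ R v u by apply/negP => Hvu; rewrite (R_antisym Huv Hvu) eqxx in Hn.
have H1 : Ka u u < Ka u v := Ka_out NRvu.
have H2 : Sab u v v by rewrite /Sab Huv Hn HG /R connect0.
have H3 : ~~ Sab u v u by rewrite /Sab (negbTE NRvu) !andbF.
by rewrite gad2_target // /= eqxx.
Qed.

Lemma Wd_nonedge u v : u != v -> ~~ G u v -> ~~ altl (restrict2 _ Wd u v).
Proof.
move=> Hn HG.
case Ruv: (R u v); first exact: Wd_reach.
case Rvu: (R v u).
  rewrite restrC; apply: Wd_reach => //; first by rewrite eq_sym.
  by rewrite Gsym.
have H1 : Ka u u < Ka u v by apply: Ka_out; rewrite Rvu.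
have H2 : Ka v v < Ka v u by apply: Ka_out; rewrite Ruv.
have E1 : restrict2 _ (plain (Ka u)) u v = [:: u; v; u; v] by apply: restr_plain.
have E2 : restrict2 _ (plain (Ka v)) u v = [:: v; u; v; u].
  by rewrite restrC; apply: restr_plain; rewrite // eq_sym.
apply/negP => /(Wd_mid u v).
rewrite /block restr_cat E1 restr_cat E2 catA => /altl_catl.
by rewrite altl_cons2 altl_cons2 altl_cons2 altl_cons2 eqxx !andbF.
Qed.

Lemma gen_wr : word_representable V G.
Proof.
exists Wd; split; first exact: mem_Wd.
move=> u v Huv; rewrite /alternate altlE; split.
- move=> HG; have := Hne HG; case: ltngtP => // H _.
  + by apply: Wd_edge; rewrite /= HG H.
  + by rewrite restrC; apply: Wd_edge; rewrite /= Gsym HG H.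
- move=> Halt; apply/negPn/negP => HG.
  by have := Wd_nonedge Huv HG; rewrite Halt.
Qed.

End Main.

Lemma key_mod (m x q k d : nat) : 3 <= m -> x = 3*q+2 -> x <= 2*m -> k + 1 = 2*m ->
  d = 1 \/ d = 6*m - 1 \/ d = x \/ d = 6*m - x \/ d = 3*m ->
  3*m < 2*((k*d) %% (6*m)) < 9*m.
Proof.
move=> Hm Hx Hxm Hk.
case => [->|[->|[->|[->|->]]]].
- rewrite modn_small; lia.
- have -> : k * (6*m - 1) = (k - 1) * (6*m) + (4*m + 1) by nia.
  rewrite modnMDl modn_small; lia.
- have -> : k * x = q * (6*m) + (4*m - x) by nia.
  rewrite modnMDl modn_small; lia.
- have -> : k * (6*m - x) = (k - q - 1) * (6*m) + (2*m + x) by nia.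
  rewrite modnMDl modn_small; lia.
- have -> : k * (3*m) = (m - 1) * (6*m) + 3*m by nia.
  rewrite modnMDl modn_small; lia.
Qed.

Lemma circ_distC m i j : circ_dist m i j = circ_dist m j i.
Proof.
rewrite /circ_dist; case: (leqP i j) => H1; case: (leqP j i) => H2 //; last by lia.
by have -> : i = j by lia.
Qed.

Lemma C2n_sym n x (u v : 'I_(2*n)) : C2n n x u v = C2n n x v u.
Proof. by rewrite /C2n /circulant circ_distC. Qed.

Definition pk n (v : nat) := ((2 * (n %/ 3) - 1) * v) %% (2 * n).

Lemma conc_len_le n x (i j : nat) : 9 <= n -> n %% 3 = 0 -> x %% 3 = 2 -> 1 < x -> x < n ->
  3 * x <= 2 * n -> i <= j -> j < 2 * n ->
  [|| circ_dist (2*n) i j == 1, circ_dist (2*n) i j == x | circ_dist (2*n) i j == n] ->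
  n < 2 * ((pk n i - pk n j) + (pk n j - pk n i)) < 3 * n.
Proof.
move=> H9 Hn3 Hx3 Hx1 Hxn H3x Hij Hj H.
set m := n %/ 3; set q := x %/ 3; set k := 2 * m - 1.
have Hn : n = 3 * m by have := divn_eq n 3; rewrite Hn3 -/m; lia.
have Hx : x = 3 * q + 2 by have := divn_eq x 3; rewrite Hx3 -/q; lia.
have Hm : 3 <= m by lia.
have Hk : k + 1 = 2 * m by rewrite /k; lia.
have Hxm : x <= 2 * m by lia.
set d := j - i.
have Hd : d = 1 \/ d = 6*m - 1 \/ d = x \/ d = 6*m - x \/ d = 3*m.
  move: H; rewrite /circ_dist Hij -/d /minn.
  case: ltnP => Hlt /orP[/eqP E|/orP[/eqP E|/eqP E]]; lia.
have Hr := key_mod Hm Hx Hxm Hk Hd.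
rewrite /pk -/m -/k.
have -> : j = i + d by rewrite /d; lia.
rewrite (mulnDr k i d) -modnDm.
have HA : (k * i) %% (2 * n) < 2 * n by rewrite ltn_pmod //; lia.
have HB : (k * d) %% (2 * n) < 2 * n by rewrite ltn_pmod //; lia.
rewrite Hn in HA HB *.
have E6 : 2 * (3 * m) = 6 * m by lia.
rewrite E6 in HA HB *.
move: HA HB Hr; generalize ((k * i) %% (6 * m)) ((k * d) %% (6 * m)) => A B HA HB Hr.
clear H Hd Hk Hx Hxm H3x Hxn Hx1 Hx3 Hn3 Hij Hj.
case: (ltnP (A + B) (6 * m)) => HAB.
  rewrite (modn_small HAB); lia.
have -> : A + B = 1 * (6 * m) + (A + B - 6 * m) by lia.
rewrite modnMDl modn_small; lia.
Qed.

Lemma ord_len n x (u v : 'I_(2*n)) : 9 <= n -> n %% 3 = 0 -> x %% 3 = 2 -> 1 < x -> x < n ->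
  3 * x <= 2 * n -> C2n n x u v ->
  n < 2 * ((pk n u - pk n v) + (pk n v - pk n u)) < 3 * n.
Proof.
move=> H9 Hn3 Hx3 Hx1 Hxn H3x.
rewrite /C2n /circulant unfold_in /=.
case: (leqP u v) => Huv H.
  by apply: (conc_len_le H9 Hn3 Hx3 Hx1 Hxn H3x Huv (ltn_ord v)).
rewrite addnC; apply: (conc_len_le H9 Hn3 Hx3 Hx1 Hxn H3x (ltnW Huv) (ltn_ord u)).
by rewrite circ_distC.
Qed.

Lemma big_case n x : 9 <= n -> n %% 3 = 0 -> x %% 3 = 2 -> 1 < x -> x < n ->
  3 * x <= 2 * n -> word_representable _ (C2n n x).
Proof.
move=> H9 Hn3 Hx3 Hx1 Hxn H3x.
apply: (@gen_wr _ _ (@C2n_sym n x) (fun v : 'I_(2*n) => pk n v) n).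
- move=> u v Huv Hlt; have := ord_len H9 Hn3 Hx3 Hx1 Hxn H3x Huv; lia.
- move=> u v Huv; apply/eqP => E; have := ord_len H9 Hn3 Hx3 Hx1 Hxn H3x Huv; rewrite E; lia.
Qed.

Lemma dec_wr (V : finType) (G : rel V) (L w : seq V) :
  (forall v, v \in L) ->
  all (fun v => v \in w) L ->
  all (fun u => all (fun v => (u != v) ==> (G u v == alternate _ w u v)) L) L ->
  word_representable V G.
Proof.
move=> HL /allP H1 /allP H2; exists w; split.
  by move=> v; apply: H1.
move=> u v Huv.
have /allP /(_ v (HL v)) := H2 u (HL u); rewrite Huv /= => /eqP ->.
by [].
Qed.

Definition ordm (n i : nat) : 'I_n.+1 := @Ordinal n.+1 (i %% n.+1) (ltn_pmod i (ltn0Sn n)).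

Lemma mem_ordm n (v : 'I_n.+1) : v \in [seq ordm n i | i <- iota 0 n.+1].
Proof.
apply/mapP; exists (val v); first by rewrite mem_iota /= add0n ltn_ord.
by apply: val_inj; rewrite /= modn_small.
Qed.

Lemma case3 : word_representable _ (C2n 3 2).
Proof.
apply: (@dec_wr _ _ [seq ordm 5 i | i <- iota 0 6] [seq ordm 5 i | i <- iota 0 6]).
  exact: mem_ordm.
all: vm_compute; reflexivity.
Qed.

Definition w6 : seq 'I_12 :=
  [seq ordm 11 i | i <- [:: 0; 3; 7; 1; 4; 8; 2; 5; 9; 3; 6; 10; 4; 7; 11; 5; 8; 0; 6; 9; 1; 7; 10; 2; 8; 11; 3; 9; 0; 4; 10; 1; 5; 11; 2; 6]].

Lemma case6 : word_representable _ (C2n 6 2).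
Proof.
apply: (@dec_wr _ _ [seq ordm 11 i | i <- iota 0 12] w6).
  exact: mem_ordm.
all: vm_compute; reflexivity.
Qed.

Theorem corollary6 (n x : nat) :
  1 < x -> x < n ->
  n %% 3 = 0 -> x %% 3 = 2 -> 3 * x <= 2 * n ->
  word_representable _ (C2n n x).
Proof.
move=> Hx1 Hxn Hn3 Hx3 H3x.
case: (leqP 9 n) => Hn9; first exact: big_case.
have : (n = 3 /\ x = 2) \/ (n = 6 /\ x = 2) by lia.
by case => [[-> ->]|[-> ->]]; [exact: case3 | exact: case6].
Qed.
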